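(* Let $U_2>0$ and constants $k_1,k_2$ with $k_1>k_2-1>0$. Consider the system $$\dot e_\psi=e_r,\qquad \dot e_r=-e_r-U_2\,\sigma\!\left(\frac{k_1}{U_2}e_\psi+\frac{k_2-1}{U_2}e_r\right),$$ where $\sigma(t)=\frac{t}{\max(1,|t|)}$. Then for every solution, after a sufficiently large (finite) time the saturation operates in its linear region, i.e. $\left|\frac{k_1}{U_2}e_\psi+\frac{k_2-1}{U_2}e_r\right|\le 1$, and $(e_\psi,e_r)$ converges exponentially to zero. *)

(* Defs.v *)
From Stdlib Require Import Reals.
Open Scope R_scope.

Definition sat (t : R) : R := t / Rmax 1 (Rabs t).

(* Main.v *)
Require Import Defs.
From Stdlib Require Import Reals Lra Psatz.
Open Scope R_scope.

Definition Phi (s : R) : R :=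
  if Rlt_dec 1 s then s - 1/2 else if Rlt_dec s (-1) then - s - 1/2 else s^2/2.

Lemma sat_in s : -1 <= s <= 1 -> sat s = s.
Proof. intros H. unfold sat. rewrite Rmax_left. field. apply Rabs_le; lra. Qed.
Lemma sat_pos s : 1 < s -> sat s = 1.
Proof. intros H. unfold sat. rewrite Rabs_right by lra. rewrite Rmax_right by lra. field. lra. Qed.
Lemma sat_neg s : s < -1 -> sat s = -1.
Proof. intros H. unfold sat. rewrite Rabs_left by lra. rewrite Rmax_right by lra. field. lra. Qed.

Lemma Phi_in s : -1 <= s <= 1 -> Phi s = s^2/2.
Proof. intros H. unfold Phi. destruct (Rlt_dec 1 s); [lra|]. destruct (Rlt_dec s (-1)); [lra|]. auto. Qed.

Lemma Phi_taylor s h : Rabs (Phi (s+h) - Phi s - sat s * h) <= h^2/2.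
Proof.
  unfold Phi.
  destruct (Rlt_dec 1 s) as [a|a]; [rewrite sat_pos by lra|];
  destruct (Rlt_dec s (-1)) as [b|b]; try rewrite sat_neg by lra;
  try (apply Rnot_lt_le in a); try (apply Rnot_lt_le in b);
  try rewrite sat_in by lra;
  destruct (Rlt_dec 1 (s+h)) as [c|c];
  destruct (Rlt_dec (s+h) (-1)) as [d|d];
  try (apply Rnot_lt_le in c); try (apply Rnot_lt_le in d);
  apply Rabs_le; split; nra.
Qed.

Lemma Phi_deriv s : derivable_pt_lim Phi s (sat s).
Proof.
  intros eps Heps. exists (mkposreal eps Heps). intros h Hh0 Hh. simpl in Hh.
  assert (E : (Phi (s + h) - Phi s) / h - sat s = (Phi (s+h) - Phi s - sat s * h) * / h) by (field; auto).
  rewrite E, Rabs_mult, Rabs_inv.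
  pose proof (Phi_taylor s h) as T.
  assert (P : 0 < Rabs h) by (apply Rabs_pos_lt; auto).
  assert (Q : h^2 = Rabs h * Rabs h) by (rewrite <- Rabs_mult; rewrite Rabs_right; nra).
  apply Rle_lt_trans with (Rabs h / 2); [|lra].
  apply Rmult_le_reg_r with (Rabs h); auto.
  rewrite Rmult_assoc, Rinv_l by lra. nra.
Qed.

Lemma Phi_nonneg s : 0 <= Phi s.
Proof. unfold Phi. destruct (Rlt_dec 1 s); [lra|]. destruct (Rlt_dec s (-1)); nra. Qed.

Lemma Phi_small s : Phi s <= 1/2 -> -1 <= s <= 1.
Proof. unfold Phi. destruct (Rlt_dec 1 s); [lra|]. destruct (Rlt_dec s (-1)); lra. Qed.

Lemma Phi_lin s : - Phi s - 1/2 <= s <= Phi s + 1/2.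
Proof. unfold Phi. destruct (Rlt_dec 1 s); [lra|]. destruct (Rlt_dec s (-1)); nra. Qed.

Lemma Phi_big s : 1/4 <= Phi s -> 1/2 <= sat s ^ 2.
Proof. unfold Phi. destruct (Rlt_dec 1 s) as [a|a]; [rewrite sat_pos; lra|].
  destruct (Rlt_dec s (-1)) as [b|b]; [rewrite sat_neg; lra|].
  rewrite sat_in by lra. nra. Qed.

Lemma dpl_eq f x l l' : l = l' -> derivable_pt_lim f x l -> derivable_pt_lim f x l'.
Proof. intros ->; auto. Qed.

Lemma decr (g g' : R -> R) (t0 : R) :
 (forall t, t0 <= t -> derivable_pt_lim g t (g' t)) -> (forall t, t0 <= t -> g' t <= 0) ->
 forall a b, t0 <= a -> a <= b -> g b <= g a.
Proof.
  intros D N a b Ha Hab. destruct (Req_dec a b) as [->|ne]; [lra|].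
  destruct (MVT_cor2 g g' a b) as [c [Hc1 Hc2]]; [lra| intros c Hc; apply D; lra|].
  pose proof (N c ltac:(lra)). nra.
Qed.

Lemma reach (g g' : R->R) L m : 0 < m -> (forall t, 0<=t -> derivable_pt_lim g t (g' t)) ->
  (forall t, 0<=t -> g' t <= 0) -> (forall t, 0 <= t -> L <= g t -> g' t <= -m) ->
  exists T, 0 <= T /\ g T <= L.
Proof.
  intros Hm D N B. set (T := (Rabs (g 0 - L) + 1)/m).
  assert (HT : 0 < T) by (unfold T; apply Rdiv_lt_0_compat; [pose proof (Rabs_pos (g 0 - L))|]; lra).
  exists T. split; [lra|]. destruct (Rle_dec (g T) L) as [h|h]; auto. exfalso.
  destruct (MVT_cor2 g g' 0 T) as [c [Hc1 Hc2]]; [lra| intros c Hc; apply D; lra|].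
  pose proof (decr g g' 0 D N c T ltac:(lra) ltac:(lra)).
  pose proof (B c ltac:(lra) ltac:(lra)).
  assert (mT : m * T = Rabs (g 0 - L) + 1) by (unfold T; field; lra).
  pose proof (Rle_abs (g 0 - L)). nra.
Qed.

Lemma xy_bound (U2 k1 q c x y S D : R) : 0 < c -> 0 < k1 ->
  S^2 <= D -> y^2 <= D / c -> k1 * x = U2 * S - q * y ->
  x^2 + y^2 <= ((2*U2^2 + 2*q^2/c)/k1^2 + 1/c) * D.
Proof.
  intros Hc Hk HS Hy E.
  assert (D0 : 0 <= D) by nra.
  assert (H1 : k1^2 * x^2 <= 2*U2^2*S^2 + 2*q^2*y^2).
  { replace (k1^2*x^2) with ((k1*x)^2) by ring. rewrite E. pose proof (pow2_ge_0 (U2*S + q*y)). nra. }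
  assert (H2 : k1^2 * x^2 <= 2*U2^2*D + 2*q^2*(D/c)) by nra.
  assert (H3 : x^2 <= (2*U2^2 + 2*q^2/c)/k1^2 * D).
  { apply Rmult_le_reg_l with (k1^2); [nra|].
    replace (k1 ^ 2 * ((2 * U2 ^ 2 + 2 * q ^ 2 / c) / k1 ^ 2 * D)) with (2*U2^2*D + 2*q^2*(D/c)) by (field; lra). auto. }
  replace (((2*U2^2 + 2*q^2/c)/k1^2 + 1/c) * D) with ((2*U2^2 + 2*q^2/c)/k1^2 * D + D/c) by (field; lra).
  lra.
Qed.

Theorem lemma2 (U2 k1 k2 : R) (HU2 : 0 < U2) (Hk : k1 > k2 - 1) (Hk2 : k2 - 1 > 0)
  (epsi er : R -> R)
  (Hpsi : forall t, 0 <= t -> derivable_pt_lim epsi t (er t))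
  (Her : forall t, 0 <= t ->
     derivable_pt_lim er t
       (- er t - U2 * sat (k1 / U2 * epsi t + (k2 - 1) / U2 * er t))) :
  (exists T, 0 <= T /\ forall t, T <= t ->
      Rabs (k1 / U2 * epsi t + (k2 - 1) / U2 * er t) <= 1)
  /\
  (exists C lam, 0 < lam /\ forall t, 0 <= t ->
      sqrt (epsi t ^ 2 + er t ^ 2) <= C * exp (- lam * t)).
Proof.
  set (q := k2 - 1) in *.
  set (c := (k1 - q) / U2^2).
  assert (Hc : 0 < c) by (unfold c; apply Rdiv_lt_0_compat; nra).
  set (s := fun t => k1 / U2 * epsi t + q / U2 * er t).
  set (ds := fun t => k1 / U2 * er t + q / U2 * (- er t - U2 * sat (s t))).
  set (V := fun t => Phi (s t) + c/2 * (er t * er t)).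
  set (V' := fun t => - q * sat (s t) ^ 2 - c * er t ^ 2).
  assert (Hs : forall t, 0 <= t -> derivable_pt_lim s t (ds t)).
  { intros t Ht. apply derivable_pt_lim_plus.
    - apply derivable_pt_lim_scal. auto.
    - apply derivable_pt_lim_scal. auto. }
  assert (HV : forall t, 0 <= t -> derivable_pt_lim V t (V' t)).
  { intros t Ht.
    pose proof (derivable_pt_lim_comp s Phi t _ _ (Hs t Ht) (Phi_deriv (s t))) as A.
    pose proof (derivable_pt_lim_mult er er t _ _ (Her t Ht) (Her t Ht)) as B.
    pose proof (derivable_pt_lim_scal _ (c/2) t _ B) as B'.
    pose proof (derivable_pt_lim_plus _ _ t _ _ A B') as C.
    eapply dpl_eq; [|exact C].
    unfold V', ds, c. fold (s t). field. lra. }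
  assert (HVn : forall t, 0 <= t -> V' t <= 0).
  { intros t _. unfold V'. nra. }
  set (m := q / (2 * (q+1))).
  assert (Hm : 0 < m) by (unfold m; apply Rdiv_lt_0_compat; lra).
  assert (Hm1 : m <= 1/2) by (unfold m; apply Rmult_le_reg_r with (2*(q+1)); [lra|]; field_simplify; lra).
  assert (Hm2 : m <= q/2) by (unfold m; apply Rmult_le_reg_r with (2*(q+1)); [lra|]; field_simplify; nra).
  destruct (reach V V' (1/2) m Hm HV HVn) as [T [HT0 HT]].
  { intros t Ht HL. unfold V, V' in *.
    pose proof (Phi_nonneg (s t)).
    destruct (Rle_dec (1/4) (Phi (s t))) as [h|h].
    - pose proof (Phi_big _ h). nra.
    - nra. }
  assert (Vnn : forall t, 0 <= V t) by (intro t; unfold V; pose proof (Phi_nonneg (s t)); nra).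
  assert (Hin : forall t, T <= t -> -1 <= s t <= 1 /\ V t <= 1/2).
  { intros t Ht. pose proof (decr V V' 0 HV HVn T t HT0 Ht).
    split; [|lra]. apply Phi_small. unfold V in *. nra. }
  split.
  { exists T. split; auto. intros t Ht. apply Rabs_le. destruct (Hin t Ht) as [[h1 h2] _].
    unfold s in h1, h2. lra. }
  set (lam := 2*q/(q+1)).
  assert (Hl : 0 < lam) by (unfold lam; apply Rdiv_lt_0_compat; lra).
  assert (Hl1 : lam/2 <= 1) by (unfold lam; apply Rmult_le_reg_r with (q+1); [lra|]; field_simplify; lra).
  assert (Hl2 : lam/2 <= q) by (unfold lam; apply Rmult_le_reg_r with (q+1); [lra|]; field_simplify; nra).
  set (ex := fun t => exp (lam * t)).
  set (h := fun t => V t * ex t).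
  assert (Hex : forall t, derivable_pt_lim ex t (exp (lam*t) * (lam * 1))).
  { intros t. apply (derivable_pt_lim_comp (mult_real_fct lam id) exp t).
    - apply derivable_pt_lim_scal, derivable_pt_lim_id.
    - apply derivable_pt_lim_exp. }
  assert (Hh : forall t, T <= t -> derivable_pt_lim h t (V' t * ex t + V t * (exp (lam*t) * (lam * 1)))).
  { intros t Ht. apply (derivable_pt_lim_mult V ex). apply HV; lra. apply Hex. }
  assert (Hhn : forall t, T <= t -> V' t * ex t + V t * (exp (lam*t) * (lam * 1)) <= 0).
  { intros t Ht. destruct (Hin t Ht) as [Hst _].
    assert (E1 : V t = s t ^2 /2 + c/2 * (er t * er t)) by (unfold V; rewrite Phi_in; auto).
    assert (E2 : V' t = - q * s t ^2 - c * er t ^ 2) by (unfold V'; rewrite sat_in; auto).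
    rewrite E1, E2. unfold ex. pose proof (exp_pos (lam*t)).
    assert (A1 : (lam/2 - q) * s t ^ 2 <= 0) by (pose proof (pow2_ge_0 (s t)); nra).
    assert (A2 : c * (lam/2 - 1) * (er t * er t) <= 0) by (pose proof (Rle_0_sqr (er t)); unfold Rsqr in *; assert (c * (lam/2-1) <= 0) by nra; nra).
    assert (- q * s t ^ 2 - c * er t ^ 2 + (s t ^ 2 / 2 + c / 2 * (er t * er t)) * lam <= 0) by nra.
    nra. }
  assert (Hdec : forall t, T <= t -> V t <= 1/2 * exp (lam * T) * exp (- lam * t)).
  { intros t Ht. pose proof (decr h _ T Hh Hhn T t (Rle_refl _) Ht) as D.
    unfold h, ex in D. pose proof (exp_pos (lam * t)). pose proof (exp_pos (lam * T)).
    assert (Ei : exp (lam * t) * exp (- lam * t) = 1) by (rewrite <- exp_plus; replace (lam*t + -lam*t) with 0 by ring; apply exp_0).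
    pose proof (exp_pos (- lam * t)).
    destruct (Hin T (Rle_refl _)) as [_ VT].
    nra. }
  set (V0 := V 0).
  set (D0 := (V0 + 1/2)^2 + 2*V0).
  set (G := (2*U2^2 + 2*q^2/c)/k1^2 + 1/c).
  assert (HG : 0 < G).
  { unfold G. assert (0 < 1/c) by (apply Rdiv_lt_0_compat; lra).
    assert (0 <= (2*U2^2 + 2*q^2/c)/k1^2). { unfold Rdiv; apply Rmult_le_pos. assert (0 <= 2*q^2/c) by (unfold Rdiv; apply Rmult_le_pos; [nra| left; apply Rinv_0_lt_compat; lra]). nra. left; apply Rinv_0_lt_compat; nra. } lra. }
  set (K := G * (D0 + 1) * exp (lam * T)).
  assert (HK : 0 <= K) by (unfold K; pose proof (exp_pos (lam*T)); assert (0 <= D0) by (unfold D0; pose proof (Vnn 0) as HV0; fold V0 in HV0; nra); apply Rmult_le_pos; [apply Rmult_le_pos|]; lra).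
  assert (Hsq : forall t, 0 <= t -> epsi t ^ 2 + er t ^ 2 <= K * exp (- lam * t)).
  { intros t Ht.
    assert (Ek : k1 * epsi t = U2 * s t - q * er t) by (unfold s; field; lra).
    assert (Hk1 : 0 < k1) by lra.
    set (E := exp (lam * T) * exp (- lam * t)).
    assert (EE : K * exp (- lam * t) = G * ((D0 + 1) * E)) by (unfold K, E; ring).
    rewrite EE.
    assert (HD0 : 0 <= D0) by (unfold D0; pose proof (Vnn 0) as HV0; fold V0 in HV0; nra).
    destruct (Rle_dec T t) as [Htt|Htt].
    - assert (HE : 0 < E) by (unfold E; pose proof (exp_pos (lam*T)); pose proof (exp_pos (-lam*t)); nra).
      pose proof (Hdec t Htt) as Hd. destruct (Hin t Htt) as [Hst _].
      assert (E1 : V t = s t ^2 /2 + c/2 * (er t * er t)) by (unfold V; rewrite Phi_in; auto).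
      assert (Hd' : V t <= E/2) by (unfold E; lra).
      assert (cy : 0 <= c * (er t * er t)) by (apply Rmult_le_pos; nra).
      apply Rle_trans with (G * E).
      + apply (xy_bound U2 k1 q c (epsi t) (er t) (s t)); auto.
        * nra.
        * apply Rmult_le_reg_l with c; auto. replace (c * (E / c)) with E by (field; lra). nra.
      + apply Rmult_le_compat_l; nra.
    - assert (HE : 1 <= E).
      { unfold E. rewrite <- exp_plus. rewrite <- exp_0. apply exp_le_3 || (destruct (Rle_lt_or_eq_dec 0 (lam * T + - lam * t)); [nra| left; apply exp_increasing; auto | rewrite e; lra]). }
      pose proof (decr V V' 0 HV HVn 0 t (Rle_refl _) Ht) as Hd. fold V0 in Hd.
      pose proof (Phi_lin (s t)). pose proof (Phi_nonneg (s t)).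
      assert (PV : Phi (s t) <= V0) by (unfold V in Hd; nra).
      apply Rle_trans with (G * D0).
      + apply (xy_bound U2 k1 q c (epsi t) (er t) (s t)); auto.
        * unfold D0. assert (0 <= V0) by apply Vnn. nra.
        * apply Rmult_le_reg_l with c; auto. replace (c * (D0 / c)) with D0 by (field; lra).
          unfold D0. unfold V in Hd. nra.
      + apply Rmult_le_compat_l; nra. }
  exists (sqrt K), (lam/2). split; [lra|].
  intros t Ht.
  assert (Ee : exp (- lam * t) = exp (- (lam/2) * t) * exp (- (lam/2) * t)) by (rewrite <- exp_plus; replace (- (lam / 2) * t + - (lam / 2) * t) with (- lam * t) by field; reflexivity).
  pose proof (exp_pos (- (lam/2) * t)).
  rewrite <- (sqrt_square (exp (- (lam/2) * t))) by lra.
  rewrite <- sqrt_mult by nra.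
  apply sqrt_le_1_alt. rewrite <- Ee. auto.
Qed.
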